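(* Let $G$ be a connected graph with $n$ vertices and $k\ge1$. Let $W_k(G)$ be the sum of the spanning tree weights of all connected $k$-partitions of $G$. Then $$n^{-2(k-1)}\le \frac{W_k(G)}{\tau(G)}\le n^{2(k-1)}.$$
   Context: A connected $k$-partition of $G=(V,E)$ is a partition of $V$ into $k$ nonempty sets (pieces) each inducing a connected subgraph. For a graph $H$, $\tau(H)$ is its number of spanning trees, and the spanning tree weight of a connected partition $P$ is $\prod_{S\in P}\tau(G[S])$. *)

(* Defs.v *)
From mathcomp Require Import all_boot all_order all_algebra.
Set Implicit Arguments. Unset Strict Implicit. Unset Printing Implicit Defensive.
Import Order.TTheory GRing.Theory Num.Theory.

(* A simple graph on a finite vertex type T is a symmetric irreflexive
   relation e.  Edges are represented as 2-element vertex sets {x,y}. *)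
Definition simple_graph (T : finType) (e : rel T) : Prop :=
  irreflexive e /\ symmetric e.

Definition induced_rel (T : finType) (e : rel T) (S : {set T}) : rel T :=
  fun x y => [&& e x y, x \in S & y \in S].

Definition induces_connected (T : finType) (e : rel T) (S : {set T}) : bool :=
  (S != set0) && [forall x in S, forall y in S, connect (induced_rel e S) x y].

Definition induced_edges (T : finType) (e : rel T) (S : {set T}) : {set {set T}} :=
  [set f : {set T} | [exists x, exists y,
     [&& e x y, x \in S, y \in S & f == [set x; y]]]].

Definition edge_rel (T : finType) (F : {set {set T}}) : rel T :=
  fun x y => [set x; y] \in F.

Definition acyclic_edges (T : finType) (F : {set {set T}}) : bool :=
  [forall f in F, forall x, forall y,
     (f == [set x; y]) ==> ~~ connect (edge_rel (F :\ f)) x y].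

Definition spanning_tree (T : finType) (e : rel T) (S : {set T})
    (F : {set {set T}}) : bool :=
  [&& F \subset induced_edges e S,
      [forall x in S, forall y in S, connect (edge_rel F) x y]
    & acyclic_edges F].

Definition tau (T : finType) (e : rel T) (S : {set T}) : nat :=
  #|[set F : {set {set T}} | spanning_tree e S F]|.

Definition connected_partition (T : finType) (e : rel T) (k : nat)
    (P : {set {set T}}) : bool :=
  [&& partition P [set: T], #|P| == k & [forall S in P, induces_connected e S]].

Definition st_weight (T : finType) (e : rel T) (P : {set {set T}}) : nat :=
  \prod_(S in P) tau e S.

Definition W (T : finType) (e : rel T) (k : nat) : nat :=
  \sum_(P : {set {set T}} | connected_partition e k P) st_weight e P.

(* Main.v *)
Require Import Defs.
From mathcomp Require Import all_boot all_order all_algebra zify.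
Import Order.TTheory GRing.Theory Num.Theory.
Set Implicit Arguments. Unset Strict Implicit. Unset Printing Implicit Defensive.

Section G.
Variable T : finType.
Implicit Types (F : {set {set T}}) (u v w x y a b : T).

Local Notation cn F := (connect (edge_rel F)).

Lemma er_sym F : symmetric (edge_rel F).
Proof. by move=> x y; rewrite /edge_rel setUC. Qed.

Lemma cn_sym F x y : cn F x y = cn F y x.
Proof. exact: (sym_connect_sym (er_sym F)). Qed.

Lemma cn_trans F x y z : cn F x y -> cn F y z -> cn F x z.
Proof. exact: connect_trans. Qed.

Lemma closureP (R : rel T) (A : {pred T}) u v :
  (forall x y, R x y -> x \in A -> y \in A) -> u \in A -> connect R u v -> v \in A.
Proof.
move=> cl Au /connectP[p Rp ->]; elim: p u Au Rp => //= y p IH x Ax /andP[Rxy Rp].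
exact: IH (cl _ _ Rxy Ax) Rp.
Qed.

Lemma set2_eq a b c d : [set a; b] = [set c; d] -> (a = c /\ b = d) \/ (a = d /\ b = c).
Proof.
move=> E.
have ha : a \in [set c; d] by rewrite -E set21.
have hb : b \in [set c; d] by rewrite -E set22.
have hc : c \in [set a; b] by rewrite E set21.
have hd : d \in [set a; b] by rewrite E set22.
move: hc hd; case/set2P: ha => ->; case/set2P: hb => -> hc hd.
- by rewrite setUid in hd; move/set1P: hd => ->; left.
- by left.
- by right.
- by rewrite setUid in hc; move/set1P: hc => ->; left.
Qed.

Lemma er_U1 F a b u v :
  edge_rel ([set a; b] |: F) u v = ([set u; v] == [set a; b]) || edge_rel F u v.
Proof. by rewrite /edge_rel in_setU1. Qed.

Lemma cn_U1 F a b u v : cn ([set a; b] |: F) u v ->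
  cn F u v || ((cn F u a || cn F u b) && (cn F v a || cn F v b)).
Proof.
move=> H.
pose A := [pred w | cn F u w || ((cn F u a || cn F u b) && (cn F w a || cn F w b))].
have : v \in A.
  apply: (closureP _ _ H); last by rewrite inE connect0.
  move=> x y; rewrite er_U1 => /orP[/eqP /set2_eq [[-> ->]|[-> ->]] | Fxy].
  - rewrite !inE => Hx; apply/orP; right; rewrite connect0 orbT andbT.
    by case/orP: Hx => [->|/andP[]].
  - rewrite !inE => Hx; apply/orP; right; rewrite connect0 andbT.
    by case/orP: Hx => [->|/andP[]]; rewrite ?orbT.
  - have Cxy : cn F x y := connect1 Fxy.
    have Cyx : cn F y x by rewrite cn_sym.
    rewrite !inE => /orP[Cux|/andP[-> /orP[Cxa|Cxb]]].
    + by rewrite (cn_trans Cux Cxy).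
    + by rewrite (cn_trans Cyx Cxa) orbT.
    + by rewrite (cn_trans Cyx Cxb) !orbT.
by [].
Qed.

Lemma cn_U1_intro F a b u v :
  cn F u v || ((cn F u a || cn F u b) && (cn F v a || cn F v b)) -> cn ([set a; b] |: F) u v.
Proof.
have sub : forall x y, cn F x y -> cn ([set a; b] |: F) x y.
  apply: connect_sub => x y Fxy; apply: connect1; by rewrite er_U1 Fxy orbT.
have ab : cn ([set a; b] |: F) a b by apply: connect1; rewrite er_U1 eqxx.
have ba : cn ([set a; b] |: F) b a by rewrite cn_sym.
case/orP=> [/sub //|/andP[/orP[ua|ub] /orP[va|vb]]].
- by apply: (cn_trans (sub _ _ ua)); rewrite cn_sym; apply: sub.
- apply: (cn_trans (sub _ _ ua)); apply: (cn_trans ab); rewrite cn_sym; exact: sub.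
- apply: (cn_trans (sub _ _ ub)); apply: (cn_trans ba); rewrite cn_sym; exact: sub.
- by apply: (cn_trans (sub _ _ ub)); rewrite cn_sym; apply: sub.
Qed.


Definition cls F u := [set y in [set: T] | connect (edge_rel F) u y].
Definition comps F := equivalence_partition (connect (edge_rel F)) [set: T].

Lemma compsE F : comps F = cls F @: [set: T].
Proof. by []. Qed.

Lemma mem_cls F u v : (v \in cls F u) = cn F u v.
Proof. by rewrite !inE. Qed.

Lemma cls_eq F u v : cn F u v -> cls F u = cls F v.
Proof.
move=> uv; apply/setP=> w; rewrite !mem_cls; apply/idP/idP => H.
- by apply: cn_trans H; rewrite cn_sym.
- exact: cn_trans uv H.
Qed.

Lemma cn_U1E F a b u v : cn ([set a; b] |: F) u v =
  cn F u v || ((cn F u a || cn F u b) && (cn F v a || cn F v b)).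
Proof. by apply/idP/idP; [apply: cn_U1 | apply: cn_U1_intro]. Qed.

Lemma comps_U1 F a b : ~~ cn F a b ->
  #|comps F| = (#|comps ([set a; b] |: F)|).+1.
Proof.
move=> nab; set F1 := [set a; b] |: F.
set U := cls F a :|: cls F b.
have inU u : (u \in U) = (cn F u a || cn F u b).
  by rewrite !inE cn_sym [cn F b u]cn_sym.
have c1U u : u \in U -> cls F1 u = U.
  move=> uU; apply/setP=> v; rewrite mem_cls cn_U1E -!inU uU /=.
  rewrite inU; apply/orb_idl => uv; rewrite -inU.
  move: uU; rewrite !inU => /orP[ua|ub].
  - by rewrite cn_sym in uv; rewrite (cn_trans uv ua).
  - by rewrite cn_sym in uv; rewrite (cn_trans uv ub) orbT.
have c1nU u : u \notin U -> cls F1 u = cls F u.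
  move=> uU; apply/setP=> v; rewrite !mem_cls cn_U1E -!inU (negbTE uU) /=.
  by rewrite orbF.
have c0U u : u \in U -> cls F u = cls F a \/ cls F u = cls F b.
  rewrite inU => /orP[ua|ub]; [left|right]; exact: cls_eq.
set B := cls F @: (~: U).
have notB (X : {set T}) : X \subset U -> X \notin B.
  move=> XU; apply/imsetP => [[w]]; rewrite inE => wU EX.
  by move: wU; rewrite (subsetP XU) // EX mem_cls connect0.
have splitT : [set: T] = U :|: ~: U by rewrite setUCr.
have E0 : comps F = cls F a |: (cls F b |: B).
  rewrite compsE splitT imsetU setUA; congr (_ :|: _).
  apply/setP=> X; apply/imsetP/idP.
  - by case=> u /c0U [] -> ->; rewrite !inE eqxx ?orbT.
  - rewrite !inE => /orP[]/eqP->; [exists a|exists b] => //;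
      by rewrite inU connect0 ?orbT.
have E1 : comps F1 = U |: B.
  rewrite compsE splitT imsetU; congr (_ :|: _).
  - apply/setP=> X; apply/imsetP/idP.
    + by case=> u /c1U -> ->; rewrite inE.
    + move/set1P->; exists a; last by rewrite c1U // inU connect0.
      by rewrite inU connect0.
  - by apply: eq_in_imset => u; rewrite inE => /c1nU.
have sa : cls F a \subset U by apply: subsetUl.
have sb : cls F b \subset U by apply: subsetUr.
rewrite E0 E1 !cardsU1 (notB _ sb) (notB _ (subxx U)).
rewrite !inE negb_or (notB _ sa) /=.
suff -> : cls F a != cls F b by [].
apply/eqP => Eab.
by move: nab; rewrite -mem_cls Eab mem_cls connect0.
Qed.

End G.

Section G2.
Variable T : finType.
Variable e : rel T.
Hypothesis sg : simple_graph e.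
Implicit Types (F : {set {set T}}) (u v w x y a b : T).

Local Notation cn F := (connect (edge_rel F)).
Local Notation Eg := (induced_edges e [set: T]).

Definition forest F := (F \subset Eg) && acyclic_edges F.
Definition X k := [set F | forest F && (#|comps F| == k)].

Lemma cn_mono F F' x y : F' \subset F -> cn F' x y -> cn F x y.
Proof.
move=> sub; apply: connect_sub => p q H; apply: connect1.
by rewrite /edge_rel (subsetP sub).
Qed.

Lemma acyclicP F x y : acyclic_edges F -> [set x; y] \in F ->
  ~~ cn (F :\ [set x; y]) x y.
Proof.
move/forallP/(_ [set x; y]) => H fF; move: H; rewrite fF /=.
by move/forallP/(_ x)/forallP/(_ y); rewrite eqxx.
Qed.

Lemma acyclicI F : (forall x y, [set x; y] \in F -> ~~ cn (F :\ [set x; y]) x y) ->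
  acyclic_edges F.
Proof.
move=> H; apply/forallP=> f; apply/implyP=> fF; apply/forallP=> x; apply/forallP=> y.
by apply/implyP=> /eqP Ef; subst f; apply: H.
Qed.

Lemma acyclic_sub F F' : F' \subset F -> acyclic_edges F -> acyclic_edges F'.
Proof.
move=> sub ac; apply: acyclicI => x y xyF'.
apply: contra (acyclicP ac (subsetP sub _ xyF')); apply: cn_mono.
by apply: setSD.
Qed.

Lemma Eg_edge f : f \in Eg -> exists a b, [/\ e a b & f = [set a; b]].
Proof.
rewrite inE => /existsP[a /existsP[b /and4P[eab _ _ /eqP ->]]].
by exists a, b.
Qed.

Lemma Eg_in a b : e a b -> [set a; b] \in Eg.
Proof. by move=> eab; rewrite inE; apply/existsP; exists a; apply/existsP; exists b; rewrite eab !inE eqxx. Qed.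

Lemma Eg_e a b : [set a; b] \in Eg -> e a b.
Proof.
case/Eg_edge => c [d [ecd /set2_eq [[-> ->]|[-> ->]]]] //.
by case: sg => _ sy; rewrite sy.
Qed.

Lemma forest_add F a b : forest F -> e a b -> ~~ cn F a b ->
  forest ([set a; b] |: F).
Proof.
case/andP=> sub ac eab nab; apply/andP; split.
  by rewrite subUset sub1set Eg_in.
have abF : [set a; b] \notin F by apply: contra nab => H; apply: connect1.
apply: acyclicI => x y; rewrite in_setU1 => /orP[/eqP Exy|xyF].
  rewrite Exy setU1K //; case/set2_eq: Exy => [[-> ->]|[-> ->]] //.
  by rewrite cn_sym.
have ne : [set x; y] != [set a; b] by apply: contraNneq abF => <-.
have -> : ([set a; b] |: F) :\ [set x; y] = [set a; b] |: (F :\ [set x; y]).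
  apply/setP=> f; rewrite !inE; case: (f =P [set x; y]) => //= ->; by rewrite (negbTE ne).
rewrite cn_U1E negb_or (acyclicP ac xyF) /=.
have sD : F :\ [set x; y] \subset F by apply: subsetDl.
have cxy : cn F x y by apply: connect1.
apply/negP=> /andP[/orP[xa|xb] /orP[ya|yb]].
- by move: (acyclicP ac xyF); rewrite (cn_trans xa _) // cn_sym.
- move: nab; rewrite (cn_trans (cn_trans _ cxy) (cn_mono sD yb)) //.
  by rewrite cn_sym (cn_mono sD xa).
- move: nab; rewrite cn_sym (cn_trans (cn_trans _ cxy) (cn_mono sD ya)) //.
  by rewrite cn_sym (cn_mono sD xb).
- by move: (acyclicP ac xyF); rewrite (cn_trans xb _) // cn_sym.
Qed.

Lemma comps0 : #|comps (set0 : {set {set T}})| = #|T|.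
Proof.
have c0 u v : cn set0 u v -> v = u.
  move=> H; have : v \in pred1 u.
    by apply: (closureP _ _ H); rewrite ?inE // => p q; rewrite /edge_rel inE.
  by move/eqP.
rewrite compsE card_in_imset ?cardsT // => u v _ _ E.
by apply: c0; rewrite -mem_cls -E mem_cls connect0.
Qed.

Lemma comps_gt1 F : 1 < #|comps F| -> exists u v, ~~ cn F u v.
Proof.
rewrite compsE => /card_gt1P[X1 [X2 [/imsetP[u _ ->] /imsetP[v _ ->] ne]]].
by exists u, v; apply: contra ne => H; rewrite (cls_eq H).
Qed.

Lemma comps_le1 F : (forall u v, cn F u v) -> #|comps F| <= 1.
Proof.
move=> H; rewrite compsE; apply/card_le1_eqP => _ _ /imsetP[u _ ->] /imsetP[v _ ->].
exact: cls_eq.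
Qed.

Lemma cross_edge F u v : induces_connected e [set: T] -> ~~ cn F u v ->
  exists a b, e a b && ~~ cn F a b.
Proof.
case/andP=> _ /forallP/(_ u)/implyP/(_ (in_setT _))/forallP/(_ v)/implyP/(_ (in_setT _)) Huv nuv.
case: (boolP [exists a, exists b, e a b && ~~ cn F a b]) => [/existsP[a /existsP[b H]]|/existsPn H]; first by exists a, b.
exfalso; move: nuv; rewrite -mem_cls; apply/negP; rewrite negbK.
apply: (closureP _ _ Huv); last by rewrite mem_cls connect0.
move=> x y /andP[exy _]; rewrite !mem_cls => ux.
apply: (cn_trans ux); move: (H x) => /existsPn/(_ y).
by rewrite exy /= negbK.
Qed.


Lemma inj_card (aT rT : finType) (A : {set aT}) (B : {set rT}) (f : aT -> rT) :
  {in A &, injective f} -> (forall z, z \in A -> f z \in B) -> #|A| <= #|B|.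
Proof.
move=> inj fAB; rewrite -(card_in_imset inj); apply: subset_leq_card.
by apply/subsetP => _ /imsetP[z zA ->]; apply: fAB.
Qed.

Lemma card_Eg : #|Eg| <= #|T| ^ 2.
Proof.
apply: (@leq_trans #|[set [set p.1; p.2] | p in [set: T * T]]|).
  apply: subset_leq_card; apply/subsetP => f /Eg_edge[a [b [_ ->]]].
  by apply/imsetP; exists (a, b); rewrite ?inE.
by apply: (leq_trans (leq_imset_card _ _)); rewrite cardsT card_prod expnS expn1.
Qed.

Definition ce F := odflt set0 [pick f in Eg | [exists a, exists b, (f == [set a; b]) && ~~ cn F a b]].

Lemma ce_spec F : induces_connected e [set: T] -> 1 < #|comps F| ->
  exists a b, [/\ e a b, ~~ cn F a b & ce F = [set a; b]].
Proof.
move=> Gc /comps_gt1 [u [v nuv]].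
have [a0 [b0 /andP[eab0 nab0]]] := cross_edge Gc nuv.
rewrite /ce; case: pickP => [f /andP[fE /existsP[a /existsP[b /andP[/eqP Ef nab]]]] | none].
  by exists a, b; split => //; apply: Eg_e; rewrite -Ef.
move: (none [set a0; b0]); rewrite Eg_in //= => /negbT/negP; case.
by apply/existsP; exists a0; apply/existsP; exists b0; rewrite eqxx.
Qed.

Lemma merge_card k : induces_connected e [set: T] -> 1 < k ->
  #|X k| <= #|X k.-1| * #|Eg|.
Proof.
move=> Gc k1; rewrite -cardsX.
apply: (@inj_card _ _ _ _ (fun F => (ce F |: F, ce F))).
  move=> F1 F2; rewrite !inE => /andP[/andP[_ _] /eqP c1] /andP[/andP[_ _] /eqP c2] [].
  have [a1 [b1 [_ n1 E1]]] := @ce_spec F1 Gc (ltac:(by rewrite c1)).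
  have [a2 [b2 [_ n2 E2]]] := @ce_spec F2 Gc (ltac:(by rewrite c2)).
  move=> EU Ece; rewrite -(@setU1K _ (ce F1) F1); last first.
    by rewrite E1; apply: contra n1 => H; apply: connect1.
  rewrite EU Ece setU1K // E2; apply: contra n2 => H; apply: connect1.
  by [].
move=> F; rewrite inE => /andP[fF /eqP cF].
have [a [b [eab nab Ece]]] := @ce_spec F Gc (ltac:(by rewrite cF)).
apply/setXP; rewrite Ece Eg_in // inE forest_add //=; split => //.
by move: (comps_U1 nab); rewrite cF => ->.
Qed.

Definition pe F := odflt set0 [pick f in F].

Lemma split_card k : k < #|T| -> #|X k| <= #|X k.+1| * #|Eg|.
Proof.
move=> kn; rewrite -cardsX.
have pe_in F : F \in X k -> pe F \in F.
  rewrite inE => /andP[_ /eqP cF]; rewrite /pe; case: pickP => [f -> //| none].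
  have F0 : F = set0 by apply/setP => f; rewrite inE; apply: none.
  by move: kn; rewrite -cF F0 comps0 ltnn.
apply: (@inj_card _ _ _ _ (fun F => (F :\ pe F, pe F))).
  move=> F1 F2 H1 H2 [] ED Ep.
  by rewrite -(setD1K (pe_in _ H1)) -(setD1K (pe_in _ H2)) ED Ep.
move=> F FX; have fF := pe_in F FX; move: FX; rewrite inE => /andP[/andP[sub ac] /eqP cF].
have fE : pe F \in Eg by apply: (subsetP sub).
apply/setXP; split => //; case/Eg_edge: fE => a [b [eab Ef]].
rewrite Ef in fF *; rewrite inE.
have nab := acyclicP ac fF.
rewrite /forest (subset_trans (subsetDl _ _) sub) (acyclic_sub (subsetDl _ _) ac) /=.
by rewrite (comps_U1 nab) setD1K // cF.
Qed.

End G2.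

Section G3.
Variable T : finType.
Variable e : rel T.
Hypothesis sg : simple_graph e.
Implicit Types (F : {set {set T}}) (P : {set {set T}}) (S A : {set T}) (u v w x y a b : T).

Local Notation cn F := (connect (edge_rel F)).
Local Notation Eg := (induced_edges e [set: T]).

Definition restr F A := [set f in F | f \subset A].

Definition Y P := [set F : {set {set T}} | [forall f in F, exists S in P, f \subset S] &&
                           [forall S in P, spanning_tree e S (restr F S)]].

Lemma restrL F A u v : (forall x y, [set x; y] \in F -> x \in A -> y \in A) ->
  u \in A -> cn F u v -> cn (restr F A) u v && (v \in A).
Proof.
move=> cl uA H.
have : v \in [pred w | cn (restr F A) u w && (w \in A)].
  apply: (closureP _ _ H); last by rewrite inE connect0 uA.
  move=> p q pq; rewrite !inE => /andP[up pA].
  have qA := cl _ _ pq pA.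
  rewrite qA andbT; apply: (connect_trans up); apply: connect1.
  by rewrite /edge_rel inE; rewrite /edge_rel in pq; rewrite pq subUset !sub1set pA qA.
by [].
Qed.

Lemma cls_closed F u x y : [set x; y] \in F -> x \in cls F u -> y \in cls F u.
Proof. by move=> xy; rewrite !mem_cls => ux; apply: (connect_trans ux); apply: connect1. Qed.

Lemma ie_sub S : induced_edges e S \subset Eg.
Proof.
apply/subsetP => f; rewrite !inE => /existsP[a /existsP[b /and4P[eab _ _ Ef]]].
by apply/existsP; exists a; apply/existsP; exists b; rewrite eab !inE.
Qed.

Lemma ie_in S a b : e a b -> a \in S -> b \in S -> [set a; b] \in induced_edges e S.
Proof. by move=> eab aS bS; rewrite inE; apply/existsP; exists a; apply/existsP; exists b; rewrite eab aS bS eqxx. Qed.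

Lemma ie_sub2 S f : f \in induced_edges e S -> f \subset S.
Proof.
rewrite inE => /existsP[a /existsP[b /and4P[_ aS bS /eqP ->]]].
by rewrite subUset !sub1set aS bS.
Qed.

Lemma ie_n0 S f : f \in induced_edges e S -> f != set0.
Proof.
rewrite inE => /existsP[a /existsP[b /and4P[_ _ _ /eqP ->]]].
by apply/set0Pn; exists a; rewrite set21.
Qed.

Lemma forest_comps F : forest e F -> connected_partition e #|comps F| (comps F).
Proof.
case/andP=> sub ac; rewrite /connected_partition eqxx.
rewrite equivalence_partitionP /=; last first.
  move=> x y z _ _ _; split; first exact: connect0.
  move=> xy; apply/idP/idP => H; last exact: connect_trans xy H.
  by apply: connect_trans H; rewrite cn_sym.
apply/forallP => S; apply/implyP; rewrite compsE => /imsetP[u _ ->].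
apply/andP; split.
  by apply/set0Pn; exists u; rewrite mem_cls connect0.
apply/forallP => v; apply/implyP => vS; apply/forallP => w; apply/implyP => wS.
have : cn F v w.
  have H1 := vS; have H2 := wS; rewrite mem_cls cn_sym in H1.
  rewrite mem_cls in H2; exact: cn_trans H1 H2.
case/(restrL (@cls_closed F u) vS)/andP => H _.
apply: connect_sub H => p q; rewrite /edge_rel inE => /andP[pqF].
rewrite subUset !sub1set => /andP[pS qS]; apply: connect1.
rewrite /induced_rel pS qS /= andbT; apply: (Eg_e sg); exact: (subsetP sub).
Qed.


Lemma restr_sub F A : restr F A \subset F.
Proof. by apply/subsetP => f; rewrite inE => /andP[]. Qed.

Lemma Y_forest P F : partition P [set: T] -> F \in Y P -> forest e F && (comps F == P).
Proof.
move=> pP; have /and3P[/eqP cov tiP _] := pP.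
rewrite inE => /andP[/forallP H1 /forallP H2].
have blk f : f \in F -> exists2 S, S \in P & f \subset S.
  by move=> fF; move/implyP: (H1 f) => /(_ fF)/existsP[S /andP[SP fS]]; exists S.
have st S : S \in P -> spanning_tree e S (restr F S).
  by move=> SP; move/implyP: (H2 S); apply.
have fE f : f \in F -> f \in Eg.
  move=> fF; case: (blk f fF) => S SP fS; case/and3P: (st S SP) => sub _ _.
  apply: (subsetP (ie_sub S)); apply: (subsetP sub); by rewrite inE fF.
have inP u : u \in cover P by rewrite cov.
have cl u x y : [set x; y] \in F -> x \in pblock P u -> y \in pblock P u.
  move=> xyF xu; case: (blk _ xyF) => S SP; rewrite subUset !sub1set => /andP[xS yS].
  by rewrite -(same_pblock tiP xu) (def_pblock tiP SP xS).
have key u v : cn F u v = (v \in pblock P u).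
  apply/idP/idP => [H|vu].
    by apply: (closureP _ _ H) => [p q|]; [apply: cl|rewrite mem_pblock].
  have SP := pblock_mem (inP u).
  have uu : u \in pblock P u by rewrite mem_pblock.
  case/and3P: (st _ SP) => _ /forallP/(_ u)/implyP/(_ uu) H _.
  move: H => /forallP/(_ v)/implyP/(_ vu); apply: cn_mono; exact: restr_sub.
have -> : comps F == P.
  apply/eqP; rewrite /comps -[RHS](equivalence_partition_pblock pP) /equivalence_partition.
  by apply: eq_imset => x; apply/setP => y; rewrite !inE key.
rewrite /forest andbT; apply/andP; split; first by apply/subsetP.
apply: acyclicI => x y xyF; apply/negP => C.
case: (blk _ xyF) => S SP fS.
have xS : x \in S by move: fS; rewrite subUset !sub1set => /andP[].
case/and3P: (st S SP) => _ _ acS.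
have xyR : [set x; y] \in restr F S by rewrite inE xyF fS.
have := acyclicP acS xyR; apply/negP; apply/negPn.
have clS p q : [set p; q] \in F :\ [set x; y] -> p \in S -> q \in S.
  rewrite in_setD1 => /andP[_ pqF]; rewrite -(def_pblock tiP SP xS).
  exact: cl.
case/andP: (restrL clS xS C) => H _.
by apply: cn_mono H; apply/subsetP => f; rewrite !inE andbA.
Qed.

Lemma forest_Y F : forest e F -> F \in Y (comps F).
Proof.
case/andP=> sub ac; rewrite inE; apply/andP; split.
  apply/forallP => f; apply/implyP => fF.
  case/(Eg_edge): (subsetP sub _ fF) => a [b [eab Ef]].
  apply/existsP; exists (cls F a); rewrite compsE imset_f ?inE //= Ef subUset !sub1set.
  by rewrite !mem_cls connect0 connect1 // /edge_rel -Ef.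
apply/forallP => S; apply/implyP; rewrite compsE => /imsetP[u _ ->].
apply/and3P; split.
- apply/subsetP => f; rewrite inE => /andP[fF fS].
  case/(Eg_edge): (subsetP sub _ fF) => a [b [eab Ef]].
  move: fS; rewrite Ef subUset !sub1set => /andP[aS bS]; exact: ie_in.
- apply/forallP => v; apply/implyP => vS; apply/forallP => w; apply/implyP => wS.
  have : cn F v w.
    have H1 := vS; have H2 := wS; rewrite mem_cls cn_sym in H1.
    rewrite mem_cls in H2; exact: cn_trans H1 H2.
  by case/(restrL (@cls_closed F u) vS)/andP.
- exact: acyclic_sub (restr_sub _ _) ac.
Qed.


Definition hY P F := [ffun S : {set T} => if S \in P then restr F S else set0].

Lemma card_Y P : trivIset P -> #|Y P| = \prod_(S in P) tau e S.
Proof.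
move=> tiP.
pose Fm := fun S : {set T} => [set F' : {set {set T}} | spanning_tree e S F'].
have -> : \prod_(S in P) tau e S = #|pfamily set0 P Fm|.
  rewrite card_pfamily /image_mem -big_enum /=.
  elim: (enum_mem _) => [|S s IH] /=; first by rewrite big_nil.
  by rewrite big_cons IH.
have inY F : F \in Y P -> (forall f, f \in F -> exists2 S, S \in P & f \subset S)
                        /\ (forall S, S \in P -> spanning_tree e S (restr F S)).
  rewrite inE => /andP[/forallP H1 /forallP H2]; split.
    by move=> f fF; move/implyP: (H1 f) => /(_ fF)/existsP[S /andP[SP fS]]; exists S.
  by move=> S SP; move/implyP: (H2 S); apply.
rewrite -(card_in_imset (f := hY P)); last first.
  move=> F1 F2 /inY[b1 _] /inY[b2 _] E; apply/setP => f.
  have rE S : S \in P -> restr F1 S = restr F2 S.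
    by move=> SP; move/ffunP/(_ S): E; rewrite !ffunE SP.
  apply/idP/idP => fF.
  - case: (b1 f fF) => S SP fS.
    by have := rE S SP; move/setP/(_ f); rewrite !inE fF fS /= => /esym /andP[].
  - case: (b2 f fF) => S SP fS.
    by have := rE S SP; move/setP/(_ f); rewrite !inE fF fS /= => /andP[].
apply: eq_card => g; apply/imsetP/idP.
  case=> F /inY[_ st] ->; apply/pfamilyP; split.
    by apply/subsetP => S; rewrite !inE ffunE; case: (S \in P); rewrite ?eqxx.
  by move=> S SP; rewrite ffunE SP inE; apply: st.
case/pfamilyP => /subsetP supp fam.
have gS S : S \in P -> spanning_tree e S (g S) by move=> SP; have := fam S SP; rewrite inE.
pose F := \bigcup_(S in P) g S.
have rF S : S \in P -> restr F S = g S.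
  move=> SP; apply/setP => f; rewrite inE; apply/andP/idP.
  - case=> /bigcupP[S' S'P fS'] fS.
    case/and3P: (gS S' S'P) => sub' _ _.
    have fie := subsetP sub' _ fS'.
    have fS'' := ie_sub2 fie.
    case: (S =P S') => [-> //|/eqP ne].
    move: tiP => /trivIsetP/(_ _ _ SP S'P ne); rewrite -setI_eq0 => /eqP I0.
    have := ie_n0 fie; case/set0Pn => z zf; exfalso.
    have : z \in S :&: S' by rewrite inE (subsetP fS) ?(subsetP fS'').
    by rewrite I0 inE.
  - move=> fg; split; first by apply/bigcupP; exists S.
    case/and3P: (gS S SP) => sub _ _; exact: ie_sub2 (subsetP sub _ fg).
exists F.
  rewrite inE; apply/andP; split.
    apply/forallP => f; apply/implyP => /bigcupP[S SP fg]; apply/existsP; exists S.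
    rewrite SP /=; case/and3P: (gS S SP) => sub _ _; exact: ie_sub2 (subsetP sub _ fg).
  by apply/forallP => S; apply/implyP => SP; rewrite rF //; apply: gS.
apply/ffunP => S; rewrite ffunE; case: ifP => SP; first by rewrite rF.
by move: (supp S); rewrite !inE SP; case: eqP => [->|_ /(_ isT)].
Qed.


Lemma W_X k : W e k = #|X e k|.
Proof.
rewrite /W /X -sum1dep_card.
rewrite [RHS](partition_big (fun F => comps F) (connected_partition e k)); last first.
  by move=> F /andP[fF /eqP <-]; apply: forest_comps.
apply: eq_bigr => P CP; have /and3P[pP /eqP cP _] := CP.
have /and3P[_ tiP _] := pP.
rewrite /st_weight -card_Y // sum1dep_card; apply: eq_card => F.
apply/idP/idP.
  move=> HY; case/andP: (Y_forest pP HY) => fF /eqP cF; by rewrite inE fF cF cP !eqxx.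
by rewrite inE; case/andP=> /andP[fF _] /eqP <-; apply: forest_Y.
Qed.

End G3.

Section G4.
Variable T : finType.
Variable e : rel T.
Hypothesis sg : simple_graph e.
Hypothesis Gc : induces_connected e [set: T].
Local Notation n := #|T|.

Lemma chain_up j : 1 <= j <= n -> #|X e j| <= (n ^ 2) ^ (j - 1) * #|X e 1|.
Proof.
elim: j => [//|j IH] /andP[j1 jn].
case: (posnP j) => [-> |jp]; first by rewrite expn0 mul1n.
apply: (leq_trans (@merge_card _ _ sg j.+1 Gc jp)) => /=.
apply: (leq_trans (leq_mul (IH (ltac:(by rewrite jp ltnW))) (card_Eg e))).
rewrite (_ : j.+1 - 1 = (j - 1).+1)%N; last by lia.
set N2 := (#|T| ^ 2)%N.
by rewrite expnS mulnC mulnA.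
Qed.

Lemma chain_dn j : 1 <= j <= n -> #|X e 1| <= (n ^ 2) ^ (j - 1) * #|X e j|.
Proof.
elim: j => [//|j IH] /andP[j1 jn].
case: (posnP j) => [-> |jp]; first by rewrite expn0 mul1n.
apply: (leq_trans (IH (ltac:(by rewrite jp ltnW)))).
apply: (leq_trans (leq_mul (leqnn _) (@split_card _ e j jn))).
apply: (leq_trans (leq_mul (leqnn _) (leq_mul (leqnn _) (card_Eg e)))).
rewrite (_ : j.+1 - 1 = (j - 1).+1)%N; last by lia.
set N2 := (#|T| ^ 2)%N.
by rewrite expnS [N2 * _]mulnC -mulnA [_ * N2]mulnC.
Qed.

Lemma Xn_pos : 0 < #|X e n|.
Proof.
apply/card_gt0P; exists set0; rewrite inE comps0 eqxx andbT /forest sub0set /=.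
by apply: acyclicI => x y; rewrite inE.
Qed.

Lemma X1_pos : 0 < #|X e 1|.
Proof.
have n1 : 1 <= n.
  case/andP: Gc => /set0Pn[u _] _; apply/card_gt0P; by exists u.
have := chain_up (j := n) (ltac:(by rewrite n1 leqnn)).
move: Xn_pos; case: #|X e 1| => //; rewrite muln0 => H /(leq_trans H).
by [].
Qed.


Lemma W1 : W e 1 = tau e [set: T].
Proof.
rewrite /W (big_pred1 [set [set: T]]) /st_weight ?big_set1 // => P /=.
apply/idP/idP.
  case/and3P => /and3P[/eqP cov _ _] /cards1P[S PS] _.
  by move: cov; rewrite PS cover1 => ->.
move/eqP ->; rewrite /connected_partition /partition cover1 trivIset1 cards1 eqxx /=.
case/andP: (Gc) => n0 _; rewrite inE eq_sym n0 /=.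
by apply/forallP => S; apply/implyP; rewrite inE => /eqP ->.
Qed.

End G4.

Unset Implicit Arguments.
Local Open Scope ring_scope.

Theorem mainTheorem8 (T : finType) (e : rel T) (k : nat) :
  simple_graph e ->
  induces_connected e [set: T] ->
  (1 <= k)%N -> (k <= #|T|)%N ->
  ((#|T|%:R : rat) ^- (2 * (k - 1)) <= (W e k)%:R / (tau e [set: T])%:R)
  /\ ((W e k)%:R / (tau e [set: T])%:R <= (#|T|%:R : rat) ^+ (2 * (k - 1))).
Proof.
move=> sg Gc k1 kn.
have n1 : (0 < #|T|)%N by apply: leq_trans k1 kn.
have kk : (1 <= k <= #|T|)%N by rewrite k1 kn.
have up := chain_up sg Gc kk.
have dn := chain_dn Gc kk.
have tp := X1_pos sg Gc.
rewrite -(W1 Gc) !(W_X sg).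
have tpR : 0 < (#|X e 1|%:R : rat) by rewrite ltr0n.
have NpR : 0 < (#|T|%:R : rat) ^+ (2 * (k - 1)) by rewrite exprn_gt0 // ltr0n.
split.
- rewrite ler_pdivlMr // mulrC ler_pdivrMr // -natrX -natrM ler_nat expnM mulnC.
  exact: dn.
- rewrite ler_pdivrMr // -natrX -natrM ler_nat expnM.
  exact: up.
Qed.
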